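(* Let $P$ be the Borel probability measure on $\mathbb{R}$ with density $f(x)=\frac32$ if $x\in J_1:=[0,\frac13]$, $f(x)=\frac94$ if $x\in J_2\cup J_3$ where $J_2:=[\frac23,\frac79]$ and $J_3:=[\frac89,1]$, and $f(x)=0$ otherwise. Let $n\ge3$ and let $\alpha_n$ be an optimal set of $n$-means for $P$. Then: (i) $\alpha_n\cap J_i\neq\emptyset$ for all $1\le i\le3$; (ii) $\alpha_n$ contains no point of the open intervals $(\frac13,\frac23)$ and $(\frac79,\frac89)$; (iii) for $1\le i\neq j\le3$, the Voronoi region of any point of $\alpha_n\cap J_i$ contains no point of $J_j$.
   Context: An optimal set of $n$-means for $P$ is a set $\alpha\subset\mathbb{R}$ with $\mathrm{card}(\alpha)\le n$ attaining $\inf\{\int\min_{a\in\alpha}(x-a)^2\,dP(x):\mathrm{card}(\alpha)\le n\}$. For a finite $\alpha$ and $a\in\alpha$, the Voronoi region of $a$ is $M(a|\alpha)=\{x\in\mathbb{R}:|x-a|=\min_{b\in\alpha}|x-b|\}$. *)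

(* Defs.v *)
From Stdlib Require Import Reals Lra List.
From Coquelicot Require Import Coquelicot.
Import ListNotations.
Open Scope R_scope.

Definition dens (x : R) : R :=
  if Rle_dec 0 x then if Rle_dec x (1/3) then 3/2 else
  if Rle_dec (2/3) x then if Rle_dec x (7/9) then 9/4 else
  if Rle_dec (8/9) x then if Rle_dec x 1 then 9/4 else 0 else 0 else 0 else 0.

Definition inJ (i : nat) (x : R) : Prop :=
  match i with
  | 1%nat => 0 <= x <= 1/3
  | 2%nat => 2/3 <= x <= 7/9
  | 3%nat => 8/9 <= x <= 1
  | _ => False
  end.

(* min_{a in l} (x - a)^2, for a nonempty list l (0 for the empty list,
   which is never used since the quantized sets are required nonempty). *)
Definition mind (l : list R) (x : R) : R :=
  match l with
  | [] => 0
  | b :: l' => fold_right (fun c m => Rmin ((x - c) ^ 2) m) ((x - b) ^ 2) l'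
  end.

(* Quantization error  int min_{a in l} (x-a)^2 dP(x) = int_0^1 f(x) min ... dx
   (P has density f, supported in [0,1]). *)
Definition distortion (l : list R) : R := RInt (fun x => dens x * mind l x) 0 1.

Definition optimal_n_means (n : nat) (alpha : list R) : Prop :=
  NoDup alpha /\ (1 <= length alpha <= n)%nat /\
  forall beta : list R, (1 <= length beta <= n)%nat ->
    distortion alpha <= distortion beta.

(* x lies in the Voronoi region M(a|alpha): |x-a| = min_{b in alpha} |x-b|
   (with a in alpha, this is: |x-a| <= |x-b| for all b in alpha). *)
Definition voronoi (a : R) (alpha : list R) (x : R) : Prop :=
  forall b, In b alpha -> Rabs (x - a) <= Rabs (x - b).

(* Main.v *)
Require Import Defs.
From Stdlib Require Import Reals Lra Lia List Classical Arith.
From Coquelicot Require Import Coquelicot.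
Import ListNotations.
Open Scope R_scope.

Lemma fold_le x b l : forall c, (b = c \/ In c l) ->
  fold_right (fun c m => Rmin ((x - c) ^ 2) m) ((x - b) ^ 2) l <= (x-c)^2.
Proof.
  induction l as [|d l IH]; simpl; intros c H.
  - destruct H as [H|H]; [subst; lra|contradiction].
  - destruct H as [H|[H|H]].
    + eapply Rle_trans; [apply Rmin_r|]. apply IH; auto.
    + subst. apply Rmin_l.
    + eapply Rle_trans; [apply Rmin_r|]. apply IH; auto.
Qed.

Lemma mind_le l x c : In c l -> mind l x <= (x-c)^2.
Proof.
  destruct l as [|b l]; simpl; [tauto|]. intro H. apply fold_le. exact H.
Qed.

Lemma fold_att x b l : exists c, (b = c \/ In c l) /\
  fold_right (fun c m => Rmin ((x - c) ^ 2) m) ((x - b) ^ 2) l = (x-c)^2.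
Proof.
  induction l as [|d l IH].
  - exists b; simpl; auto.
  - destruct IH as [c [Hc E]]. cbn [fold_right In]. rewrite E.
    destruct (Rle_dec ((x-d)^2) ((x-c)^2)).
    + exists d. split; auto. apply Rmin_left; auto.
    + exists c. split. { destruct Hc; auto. } apply Rmin_right; lra.
Qed.

Lemma mind_att l x : l <> [] -> exists c, In c l /\ mind l x = (x-c)^2.
Proof.
  destruct l as [|b l]; [tauto|]. intros _. simpl. apply fold_att.
Qed.

Lemma mind_ge l x g : l <> [] -> (forall c, In c l -> g <= (x-c)^2) -> g <= mind l x.
Proof.
  intros Hn H. destruct (mind_att l x Hn) as [c [Hc E]]. rewrite E. auto.
Qed.

Lemma mind_ge0 l x : 0 <= mind l x.
Proof.
  destruct l as [|b l]. simpl; lra.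
  apply mind_ge. discriminate. intros; apply pow2_ge_0.
Qed.

Lemma Rmin_abs u v : Rmin u v = (u + v - Rabs (u - v)) / 2.
Proof. unfold Rmin, Rabs. destruct (Rle_dec u v); destruct (Rcase_abs (u-v)); lra. Qed.

Lemma cont_min (f g : R -> R) x : continuity_pt f x -> continuity_pt g x ->
  continuity_pt (fun y => Rmin (f y) (g y)) x.
Proof.
  intros Hf Hg.
  apply continuity_pt_ext with (f := fun y => (f y + g y - Rabs (f y - g y)) / 2).
  { intro; rewrite Rmin_abs; auto. }
  unfold Rdiv. apply continuity_pt_mult; [|apply continuity_pt_const; intros ? ?; auto].
  apply continuity_pt_minus. apply continuity_pt_plus; auto.
  apply (continuity_pt_comp (fun y => f y - g y) Rabs). apply continuity_pt_minus; auto.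
  apply Rcontinuity_abs.
Qed.

Lemma cont_sq c x : continuity_pt (fun y => (y - c)^2) x.
Proof.
  apply (continuity_pt_comp (fun y => y - c) (fun z => z^2)).
  apply continuity_pt_minus. apply continuity_pt_id. apply continuity_pt_const; intros ? ?; auto.
  apply derivable_continuous_pt. apply derivable_pt_pow.
Qed.

Lemma mind_cont_pt l x : continuity_pt (mind l) x.
Proof.
  destruct l as [|b l]; simpl.
  - apply continuity_pt_const; intros ? ?; auto.
  - induction l as [|d l IH]; simpl.
    + apply cont_sq.
    + apply cont_min. apply cont_sq. exact IH.
Qed.

Lemma mind_cont l x : continuous (mind l) x.
Proof. apply continuity_pt_filterlim. apply mind_cont_pt. Qed.

Lemma ex_mind l a b : ex_RInt (mind l) a b.
Proof. apply (@ex_RInt_continuous R_CompleteNormedModule). intros; apply mind_cont. Qed.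

Lemma sq_cont c x : continuous (fun y => (y - c)^2) x.
Proof. apply continuity_pt_filterlim. apply cont_sq. Qed.

Lemma ex_sq c a b : ex_RInt (fun y => (y - c)^2) a b.
Proof. apply (@ex_RInt_continuous R_CompleteNormedModule). intros; apply sq_cont. Qed.

Lemma RInt_sq c u v : RInt (fun y => (y-c)^2) u v = ((v-c)^3 - (u-c)^3)/3.
Proof.
  apply is_RInt_unique.
  replace (((v-c)^3 - (u-c)^3)/3) with (minus ((fun y => (y-c)^3/3) v) ((fun y => (y-c)^3/3) u)).
  2:{ unfold minus, plus, opp; simpl; field. }
  apply (@is_RInt_derive R_CompleteNormedModule (fun y => (y-c)^3/3)).
  - intros x _. auto_derive; auto. simpl. field.
  - intros; apply sq_cont.
Qed.

Lemma piece l a b k : a <= b -> (forall x, a < x < b -> dens x = k) ->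
  ex_RInt (fun x => dens x * mind l x) a b /\
  RInt (fun x => dens x * mind l x) a b = k * RInt (mind l) a b.
Proof.
  intros Hab H.
  assert (E : forall x, Rmin a b < x < Rmax a b -> k * mind l x = dens x * mind l x).
  { intros x Hx. rewrite Rmin_left in Hx by lra. rewrite Rmax_right in Hx by lra.
    rewrite H; auto. }
  split.
  - eapply ex_RInt_ext. exact E. apply (ex_RInt_scal (V:=R_NormedModule)). apply ex_mind.
  - rewrite <- (RInt_ext _ _ _ _ E).
    apply (RInt_scal (V:=R_CompleteNormedModule) (mind l)). apply ex_mind.
Qed.

Definition EJ1 l := RInt (mind l) 0 (1/3).
Definition EJ2 l := RInt (mind l) (2/3) (7/9).
Definition EJ3 l := RInt (mind l) (8/9) 1.

Lemma dist_dec l : distortion l = 3/2 * EJ1 l + 9/4 * EJ2 l + 9/4 * EJ3 l.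
Proof.
  unfold distortion, EJ1, EJ2, EJ3.
  destruct (piece l 0 (1/3) (3/2)) as [x1 e1]. lra.
  { intros x Hx. unfold dens. repeat destruct Rle_dec; lra. }
  destruct (piece l (1/3) (2/3) 0) as [x2 e2]. lra.
  { intros x Hx. unfold dens. repeat destruct Rle_dec; lra. }
  destruct (piece l (2/3) (7/9) (9/4)) as [x3 e3]. lra.
  { intros x Hx. unfold dens. repeat destruct Rle_dec; lra. }
  destruct (piece l (7/9) (8/9) 0) as [x4 e4]. lra.
  { intros x Hx. unfold dens. repeat destruct Rle_dec; lra. }
  destruct (piece l (8/9) 1 (9/4)) as [x5 e5]. lra.
  { intros x Hx. unfold dens. repeat destruct Rle_dec; lra. }
  rewrite <- (RInt_Chasles _ 0 (1/3) 1); auto.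
  2:{ apply (ex_RInt_Chasles _ _ (2/3)); auto. apply (ex_RInt_Chasles _ _ (7/9)); auto.
      apply (ex_RInt_Chasles _ _ (8/9)); auto. }
  rewrite <- (RInt_Chasles _ (1/3) (2/3) 1); auto.
  2:{ apply (ex_RInt_Chasles _ _ (7/9)); auto.
      apply (ex_RInt_Chasles _ _ (8/9)); auto. }
  rewrite <- (RInt_Chasles _ (2/3) (7/9) 1); auto.
  2:{ apply (ex_RInt_Chasles _ _ (8/9)); auto. }
  rewrite <- (RInt_Chasles _ (7/9) (8/9) 1); auto.
  unfold plus; simpl. rewrite e1, e2, e3, e4, e5. ring.
Qed.

Lemma chas l a b c : RInt (mind l) a b + RInt (mind l) b c = RInt (mind l) a c.
Proof. apply (RInt_Chasles (V:=R_CompleteNormedModule)); apply ex_mind. Qed.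

Lemma rint_le l1 l2 u v : u <= v -> (forall x, u <= x <= v -> mind l1 x <= mind l2 x) ->
  RInt (mind l1) u v <= RInt (mind l2) u v.
Proof. intros H H'. apply RInt_le; auto; try apply ex_mind. intros; apply H'; lra. Qed.

Lemma rint_ge0 l u v : u <= v -> 0 <= RInt (mind l) u v.
Proof. intros H. apply RInt_ge_0; auto. apply ex_mind. intros; apply mind_ge0. Qed.

Lemma ub_piece l u v c : u <= v -> (forall x, u <= x <= v -> mind l x <= (x-c)^2) ->
  RInt (mind l) u v <= ((v-c)^3 - (u-c)^3)/3.
Proof.
  intros H H'. rewrite <- RInt_sq. apply RInt_le; auto. apply ex_mind. apply ex_sq.
  intros; apply H'; lra.
Qed.

Lemma lb_piece l u v w1 w2 c : u <= w1 -> w1 <= w2 -> w2 <= v ->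
  (forall x, w1 <= x <= w2 -> (x-c)^2 <= mind l x) ->
  ((w2-c)^3 - (w1-c)^3)/3 <= RInt (mind l) u v.
Proof.
  intros H1 H2 H3 H. rewrite <- (chas l u w1 v), <- (chas l w1 w2 v).
  assert (0 <= RInt (mind l) u w1) by (apply rint_ge0; lra).
  assert (0 <= RInt (mind l) w2 v) by (apply rint_ge0; lra).
  assert (((w2-c)^3 - (w1-c)^3)/3 <= RInt (mind l) w1 w2).
  { rewrite <- RInt_sq. apply RInt_le; auto. apply ex_sq. apply ex_mind.
    intros; apply H; lra. }
  lra.
Qed.

Lemma rint_lt l1 l2 u v x0 : u < v -> (forall x, u <= x <= v -> mind l1 x <= mind l2 x) ->
  u <= x0 <= v -> mind l1 x0 < mind l2 x0 ->
  RInt (mind l1) u v < RInt (mind l2) u v.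
Proof.
  intros Huv Hle Hx0 Hlt.
  set (h := fun x => mind l2 x - mind l1 x).
  assert (Hc : continuity_pt h x0).
  { apply continuity_pt_minus; apply mind_cont_pt. }
  destruct (Hc (h x0 / 2)) as [alp [Halp Hd]].
  { unfold h; lra. }
  set (w1 := Rmax u (x0 - alp/2)). set (w2 := Rmin v (x0 + alp/2)).
  assert (Hw1 : u <= w1 /\ x0 - alp/2 <= w1) by (unfold w1; split; [apply Rmax_l|apply Rmax_r]).
  assert (Hw1' : w1 = u \/ w1 = x0 - alp/2) by (unfold w1, Rmax; destruct Rle_dec; auto).
  assert (Hw2 : w2 <= v /\ w2 <= x0 + alp/2) by (unfold w2; split; [apply Rmin_l|apply Rmin_r]).
  assert (Hw2' : w2 = v \/ w2 = x0 + alp/2) by (unfold w2, Rmin; destruct Rle_dec; auto).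
  assert (Hstrict : forall x, w1 <= x <= w2 -> mind l1 x < mind l2 x).
  { intros x Hx. destruct (Req_dec x x0) as [->|Hne]; auto.
    assert (R_dist (h x) (h x0) < h x0 / 2).
    { apply Hd. split. split; [exact I|auto]. simpl. unfold R_dist. apply Rabs_def1; destruct Hw1', Hw2'; lra. }
    unfold R_dist in H. apply Rabs_def2 in H. unfold h in H. lra. }
  assert (w1 < w2) by (destruct Hw1', Hw2'; lra).
  rewrite <- (chas l1 u w1 v), <- (chas l1 w1 w2 v), <- (chas l2 u w1 v), <- (chas l2 w1 w2 v).
  assert (RInt (mind l1) u w1 <= RInt (mind l2) u w1) by (apply rint_le; [lra|intros; apply Hle; lra]).
  assert (RInt (mind l1) w2 v <= RInt (mind l2) w2 v) by (apply rint_le; [lra|intros; apply Hle; lra]).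
  assert (RInt (mind l1) w1 w2 < RInt (mind l2) w1 w2).
  { apply RInt_lt; auto; try (intros; apply mind_cont). intros; apply Hstrict; lra. }
  lra.
Qed.

Definition inJall x := (0<=x<=1/3) \/ (2/3<=x<=7/9) \/ (8/9<=x<=1).

Definition repl (b c : R) (l : list R) := map (fun y => if Req_EM_T y b then c else y) l.

Lemma repl_len b c l : length (repl b c l) = length l.
Proof. unfold repl. apply length_map. Qed.

Lemma repl_in_c b c l : In b l -> In c (repl b c l).
Proof.
  intro H. unfold repl. apply in_map_iff. exists b. split; auto.
  destruct (Req_EM_T b b); congruence.
Qed.

Lemma repl_in_y b c l y : In y l -> y <> b -> In y (repl b c l).
Proof.
  intros H Hn. unfold repl. apply in_map_iff. exists y. split; auto.
  destruct (Req_EM_T y b); congruence.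
Qed.

Lemma nonnil_of_in {A} (l : list A) x : In x l -> l <> [].
Proof. intros H ->; inversion H. Qed.

Lemma repl_mono b c l x : In b l ->
  ((x-c)^2 <= (x-b)^2 \/ exists y, In y l /\ y <> b /\ (x-y)^2 <= (x-b)^2) ->
  mind (repl b c l) x <= mind l x.
Proof.
  intros Hb H.
  destruct (mind_att l x (nonnil_of_in _ _ Hb)) as [z [Hz E]]. rewrite E.
  destruct (Req_dec z b) as [->|Hne].
  - destruct H as [H|[y [Hy [Hyb H]]]].
    + eapply Rle_trans; [apply mind_le, repl_in_c, Hb|exact H].
    + apply Rle_trans with ((x-y)^2); [apply mind_le, repl_in_y; auto|exact H].
  - apply mind_le, repl_in_y; auto.
Qed.

Lemma opt_le n al be : optimal_n_means n al -> (1 <= length be <= n)%nat ->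
  distortion al <= distortion be.
Proof. intros [_ [_ H]] Hb. apply H; auto. Qed.

Lemma PI n al be : optimal_n_means n al -> (1 <= length be <= n)%nat ->
  (forall x, inJall x -> mind be x <= mind al x) ->
  (exists x0, inJall x0 /\ mind be x0 < mind al x0) -> False.
Proof.
  intros Ho Hl Hle [x0 [Hx0 Hlt]].
  pose proof (opt_le _ _ _ Ho Hl) as Hd. rewrite !dist_dec in Hd. unfold EJ1, EJ2, EJ3 in Hd.
  assert (A1 : RInt (mind be) 0 (1/3) <= RInt (mind al) 0 (1/3))
    by (apply rint_le; [lra|intros; apply Hle; unfold inJall; lra]).
  assert (A2 : RInt (mind be) (2/3) (7/9) <= RInt (mind al) (2/3) (7/9))
    by (apply rint_le; [lra|intros; apply Hle; unfold inJall; lra]).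
  assert (A3 : RInt (mind be) (8/9) 1 <= RInt (mind al) (8/9) 1)
    by (apply rint_le; [lra|intros; apply Hle; unfold inJall; lra]).
  destruct Hx0 as [H|[H|H]].
  - assert (RInt (mind be) 0 (1/3) < RInt (mind al) 0 (1/3)).
    { apply (rint_lt _ _ _ _ x0); auto; [lra|intros; apply Hle; unfold inJall; lra]. }
    lra.
  - assert (RInt (mind be) (2/3) (7/9) < RInt (mind al) (2/3) (7/9)).
    { apply (rint_lt _ _ _ _ x0); auto; [lra|intros; apply Hle; unfold inJall; lra]. }
    lra.
  - assert (RInt (mind be) (8/9) 1 < RInt (mind al) (8/9) 1).
    { apply (rint_lt _ _ _ _ x0); auto; [lra|intros; apply Hle; unfold inJall; lra]. }
    lra.
Qed.

Lemma opt_len n al : optimal_n_means n al -> (1 <= length al <= n)%nat.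
Proof. intros [_ [H _]]; exact H. Qed.

Lemma mind_pos l x : ~ In x l -> l <> [] -> 0 < mind l x.
Proof.
  intros H Hn. destruct (mind_att l x Hn) as [z [Hz E]]. rewrite E.
  assert (x - z <> 0) by (intro; apply H; replace x with z by lra; auto).
  apply pow2_gt_0; auto.
Qed.

Lemma MOVE n al b c : optimal_n_means n al -> In b al -> ~ In c al -> inJall c ->
  (forall x, inJall x -> (x-c)^2 <= (x-b)^2 \/ exists y, In y al /\ y <> b /\ (x-y)^2 <= (x-b)^2) ->
  False.
Proof.
  intros Ho Hb Hc HcJ H.
  apply (PI n al (repl b c al) Ho).
  - rewrite repl_len; apply (opt_len _ _ Ho).
  - intros x Hx; apply repl_mono; auto.
  - exists c. split; auto.
    apply Rle_lt_trans with 0.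
    + replace 0 with ((c-c)^2) by ring. apply mind_le, repl_in_c, Hb.
    + apply mind_pos; auto. eapply nonnil_of_in; eauto.
Qed.

Lemma fresh l : forall u v, u < v -> exists c, u < c < v /\ ~ In c l.
Proof.
  induction l as [|a l IH]; intros u v Huv.
  - exists ((u+v)/2). split; [lra|auto].
  - destruct (Rlt_dec a ((u+v)/2)).
    + destruct (IH ((u+v)/2) v) as [c [Hc Hn]]; [lra|].
      exists c. split; [lra|]. intros [H|H]; [lra|auto].
    + destruct (IH u ((3*u+v)/4)) as [c [Hc Hn]]; [lra|].
      exists c. split; [lra|]. intros [H|H]; [lra|auto].
Qed.

Lemma UP n al b : optimal_n_means n al -> In b al ->
  (forall x, inJall x -> exists y, In y al /\ y <> b /\ (x-y)^2 <= (x-b)^2) -> False.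
Proof.
  intros Ho Hb H. destruct (fresh al 0 (1/3)) as [c [Hc Hn]]; [lra|].
  apply (MOVE n al b c Ho Hb Hn); [unfold inJall; lra|].
  intros x Hx; right; auto.
Qed.

Lemma MOVE2 n al b c : optimal_n_means n al -> In b al -> c <> b -> inJall c ->
  (forall x, inJall x -> (x-c)^2 <= (x-b)^2 \/ exists y, In y al /\ y <> b /\ (x-y)^2 <= (x-b)^2) ->
  False.
Proof.
  intros Ho Hb Hcb HcJ H.
  destruct (classic (In c al)) as [Hin|Hn].
  - apply (UP n al b Ho Hb). intros x Hx. destruct (H x Hx) as [H1|H1]; auto.
    exists c; auto.
  - eapply MOVE; eauto.
Qed.

Definition needed (al : list R) a (S : R -> Prop) :=
  exists x, S x /\ forall y, In y al -> y <> a -> (x-a)^2 < (x-y)^2.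

Lemma not_needed al a (S : R -> Prop) : ~ needed al a S ->
  forall x, S x -> exists y, In y al /\ y <> a /\ (x-y)^2 <= (x-a)^2.
Proof.
  intros H x Hx. apply NNPP. intro H1. apply H. exists x. split; auto.
  intros y Hy Hya. apply Rnot_le_lt. intro H2. apply H1. exists y; auto.
Qed.

Lemma sqle u v : 0 <= u -> (u <= v \/ u <= -v) -> u^2 <= v^2.
Proof. intros H [H1|H1]; nra. Qed.

Lemma sqle2 x c y : (c <= x /\ (y <= c \/ y >= 2*x - c)) \/ (x <= c /\ (y >= c \/ y <= 2*x - c)) ->
  (x-c)^2 <= (x-y)^2.
Proof. intros [[H1 [H2|H2]]|[H1 [H2|H2]]]; apply (sqle _ _ ltac:(lra)) || idtac.
  all: first [apply sqle; lra | replace ((x-c)^2) with ((c-x)^2) by ring;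
              replace ((x-y)^2) with ((y-x)^2) by ring; apply sqle; lra]. Qed.

Definition C3 := [1/6; 13/18; 17/18].

Lemma C3_bound : distortion C3 <= 20/3888.
Proof.
  rewrite dist_dec. unfold EJ1, EJ2, EJ3.
  assert (H1 : RInt (mind C3) 0 (1/3) <= ((1/3 - 1/6)^3 - (0-1/6)^3)/3).
  { apply ub_piece; [lra|]. intros; apply mind_le; simpl; auto. }
  assert (H2 : RInt (mind C3) (2/3) (7/9) <= ((7/9 - 13/18)^3 - (2/3-13/18)^3)/3).
  { apply ub_piece; [lra|]. intros; apply mind_le; simpl; auto. }
  assert (H3 : RInt (mind C3) (8/9) 1 <= ((1 - 17/18)^3 - (8/9-17/18)^3)/3).
  { apply ub_piece; [lra|]. intros; apply mind_le; simpl; auto. }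
  lra.
Qed.

Lemma Vbound n al : (3 <= n)%nat -> optimal_n_means n al -> distortion al <= 20/3888.
Proof.
  intros Hn Ho. eapply Rle_trans; [|apply C3_bound]. apply (opt_le _ _ _ Ho). simpl; lia.
Qed.

Lemma F1a n al : optimal_n_means n al -> forall b, In b al -> 0 <= b.
Proof.
  intros Ho b Hb. apply Rnot_lt_le. intro Hlt.
  apply (MOVE2 n al b 0 Ho Hb); [lra|unfold inJall; lra|].
  intros x Hx. left. apply sqle2. left. unfold inJall in Hx. lra.
Qed.

Lemma F1b n al : optimal_n_means n al -> forall b, In b al -> b <= 1.
Proof.
  intros Ho b Hb. apply Rnot_lt_le. intro Hlt.
  apply (MOVE2 n al b 1 Ho Hb); [lra|unfold inJall; lra|].
  intros x Hx. left. apply sqle2. right. unfold inJall in Hx. lra.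
Qed.

Lemma both_side al a x1 x2 : x1 < a < x2 ->
  (forall y, In y al -> y <> a -> (x1-a)^2 < (x1-y)^2) ->
  (forall y, In y al -> y <> a -> (x2-a)^2 < (x2-y)^2) ->
  forall y, In y al -> y <> a -> y < 2*x1 - a \/ y > 2*x2 - a.
Proof.
  intros Hx H1 H2 y Hy Hya. specialize (H1 y Hy Hya). specialize (H2 y Hy Hya).
  destruct (Rlt_le_dec y a).
  - left. assert ((x1-y)^2 - (x1-a)^2 = (a-y)*(2*x1-y-a)) by ring. nra.
  - right. assert ((x2-y)^2 - (x2-a)^2 = (a-y)*(2*x2-y-a)) by ring.
    assert (y <> a) by auto. nra.
Qed.

Lemma G1 n al : (3 <= n)%nat -> optimal_n_means n al -> forall a, In a al -> ~ (1/3 < a < 2/3).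
Proof.
  intros Hn Ho a Ha Hgap.
  destruct (classic (needed al a (fun x => 2/3<=x<=7/9 \/ 8/9<=x<=1))) as [N2|N2].
  2:{ apply (MOVE2 n al a (1/3) Ho Ha); [lra|unfold inJall; lra|].
      intros x Hx. destruct Hx as [Hx|Hx].
      - left. apply sqle2. right. lra.
      - right. apply (not_needed _ _ _ N2). exact Hx. }
  destruct (classic (needed al a (fun x => 0<=x<=1/3))) as [N1|N1].
  2:{ apply (MOVE2 n al a (2/3) Ho Ha); [lra|unfold inJall; lra|].
      intros x Hx. destruct Hx as [Hx|Hx].
      - right. apply (not_needed _ _ _ N1). exact Hx.
      - left. apply sqle2. left. lra. }
  destruct N1 as [x1 [Hx1 N1]]. destruct N2 as [x2 [Hx2 N2]].
  assert (Hs := both_side al a x1 x2 ltac:(lra) N1 N2).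
  pose proof (Vbound n al Hn Ho) as V. rewrite dist_dec in V. unfold EJ1, EJ2, EJ3 in V.
  assert (L1 : ((1/3 - (2/3-a))^3 - ((2/3-a) - (2/3-a))^3)/3 <= RInt (mind al) 0 (1/3)).
  { apply lb_piece; try lra. intros x Hx. apply mind_ge; [eapply nonnil_of_in; eauto|].
    intros y Hy. destruct (Req_dec y a) as [->|Hne].
    - apply sqle2. left. lra.
    - apply sqle2. left. destruct (Hs y Hy Hne); lra. }
  assert (L3 : 0 <= RInt (mind al) (8/9) 1) by (apply rint_ge0; lra).
  destruct (Rlt_le_dec a (5/9)).
  - assert (L2 : ((7/9 - (4/3-a))^3 - (2/3 - (4/3-a))^3)/3 <= RInt (mind al) (2/3) (7/9)).
    { apply lb_piece; try lra. intros x Hx. apply mind_ge; [eapply nonnil_of_in; eauto|].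
      intros y Hy. destruct (Req_dec y a) as [->|Hne].
      - apply sqle2. right. lra.
      - apply sqle2. right. destruct (Hs y Hy Hne); lra. }
    assert (0 <= (a - 1/3 - 9/50)^2 * ((a-1/3)/2 + 9/50 + 1/4))
      by (apply Rmult_le_pos; [apply pow2_ge_0|lra]).
    assert (0 <= RInt (mind al) (2/3) (7/9) ) by (apply rint_ge0; lra).
    nra.
  - assert (0 <= (a - 5/9) * (a-5/9) * (a - 5/9)) by (repeat apply Rmult_le_pos; lra).
    assert (0 <= RInt (mind al) (2/3) (7/9) ) by (apply rint_ge0; lra).
    nra.
Qed.

Lemma sqle3 x y w : 0 <= (y - w)*(2*x - y - w) -> (x-y)^2 <= (x-w)^2.
Proof. intro H. assert ((x-w)^2 - (x-y)^2 = (y-w)*(2*x-y-w)) by ring. lra. Qed.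

Lemma prodnn A B : (0<=A /\ 0<=B) \/ (A<=0 /\ B<=0) -> 0 <= A*B.
Proof. intros [[H1 H2]|[H1 H2]]; nra. Qed.

Lemma nonnil_len (l : list R) : (1 <= length l)%nat -> l <> [].
Proof. destruct l; simpl; [lia|discriminate]. Qed.

Lemma S4 n al : (3<=n)%nat -> optimal_n_means n al -> exists w, In w al /\ 0 < w <= 1/3.
Proof.
  intros Hn Ho. apply NNPP; intro Hno.
  pose proof (Vbound n al Hn Ho) as V. rewrite dist_dec in V. unfold EJ1,EJ2,EJ3 in V.
  assert (L1 : ((1/3 - 0)^3 - (0 - 0)^3)/3 <= RInt (mind al) 0 (1/3)).
  { apply lb_piece; try lra. intros x Hx. apply mind_ge.
    - apply nonnil_len. apply (opt_len _ _ Ho).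
    - intros y Hy. pose proof (F1a n al Ho y Hy). pose proof (G1 n al Hn Ho y Hy).
      assert (y = 0 \/ y >= 2/3).
      { destruct (Rle_dec y 0); [lra|]. destruct (Rle_dec y (1/3)).
        exfalso; apply Hno; exists y; split; auto; lra. lra. }
      apply sqle2. left. lra. }
  assert (0 <= RInt (mind al) (2/3) (7/9)) by (apply rint_ge0; lra).
  assert (0 <= RInt (mind al) (8/9) 1) by (apply rint_ge0; lra).
  lra.
Qed.

Definition pL (y:R) : bool := if Rle_dec y (1/2) then true else false.
Definition pR (y:R) : bool := negb (pL y).

Lemma filter_len f (l : list R) :
  (length (filter f l) + length (filter (fun x => negb (f x)) l) = length l)%nat.
Proof. induction l; simpl; auto. destruct (f a); simpl; lia. Qed.

Lemma in_pR y l : In y l -> y > 1/2 -> In y (filter pR l).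
Proof. intros H H'. apply filter_In. split; auto. unfold pR, pL. destruct Rle_dec; auto; lra. Qed.

Lemma in_pR' y l : In y (filter pR l) -> In y l /\ y > 1/2.
Proof. intros H. apply filter_In in H. destruct H as [H H']. unfold pR, pL in H'.
  destruct Rle_dec; simpl in H'; [discriminate|]. split; auto; lra. Qed.

Lemma in_pL y l : In y l -> y <= 1/2 -> In y (filter pL l).
Proof. intros H H'. apply filter_In. split; auto. unfold pL. destruct Rle_dec; auto; lra. Qed.

Lemma mind_sub l1 l2 x : l1 <> [] -> (forall c, In c l1 -> In c l2) -> mind l2 x <= mind l1 x.
Proof. intros Hn H. destruct (mind_att l1 x Hn) as [z [Hz E]]. rewrite E. apply mind_le; auto. Qed.

Lemma SPLIT n al C w : optimal_n_means n al -> In w al -> 0 <= w <= 1/3 ->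
  (forall y, In y al -> ~ (1/3 < y < 2/3)) -> C <> [] ->
  (length C <= length (filter pR al))%nat ->
  9/4*(EJ2 C + EJ3 C) < 9/4*(EJ2 al + EJ3 al) -> False.
Proof.
  intros Ho Hw Hw' HG HC Hlen Hlt.
  set (be := filter pL al ++ C).
  assert (Hwb : In w be). { apply in_or_app; left; apply in_pL; auto; lra. }
  assert (Hl : (1 <= length be <= n)%nat).
  { split. destruct be; [inversion Hwb|simpl; lia].
    unfold be; rewrite length_app. pose proof (filter_len pL al). pose proof (opt_len _ _ Ho).
    unfold pR in Hlen. lia. }
  pose proof (opt_le _ _ _ Ho Hl) as D. rewrite !dist_dec in D.
  assert (A1 : EJ1 be <= EJ1 al).
  { unfold EJ1; apply rint_le; [lra|]. intros x Hx.
    destruct (mind_att al x (nonnil_of_in _ _ Hw)) as [z [Hz E]]. rewrite E.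
    destruct (Rle_dec z (1/2)).
    - apply mind_le. apply in_or_app; left; apply in_pL; auto.
    - apply Rle_trans with ((x-w)^2). apply mind_le; auto.
      pose proof (HG z Hz). assert (z >= 2/3) by lra.
      apply sqle3. nra. }
  assert (A2 : EJ2 be <= EJ2 C).
  { unfold EJ2; apply rint_le; [lra|]. intros; apply mind_sub; auto. intros; apply in_or_app; auto. }
  assert (A3 : EJ3 be <= EJ3 C).
  { unfold EJ3; apply rint_le; [lra|]. intros; apply mind_sub; auto. intros; apply in_or_app; auto. }
  lra.
Qed.

Definition CR2 := [13/18; 17/18].
Definition CR3 := [25/36; 3/4; 17/18].
Definition CR4 := [25/36; 3/4; 33/36; 35/36].

Lemma CR2_bound : 9/4*(EJ2 CR2 + EJ3 CR2) <= 2/3888.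
Proof.
  unfold EJ2, EJ3.
  assert (H2 : RInt (mind CR2) (2/3) (7/9) <= ((7/9 - 13/18)^3 - (2/3-13/18)^3)/3).
  { apply ub_piece; [lra|]. intros; apply mind_le; simpl; auto. }
  assert (H3 : RInt (mind CR2) (8/9) 1 <= ((1 - 17/18)^3 - (8/9-17/18)^3)/3).
  { apply ub_piece; [lra|]. intros; apply mind_le; simpl; auto. }
  lra.
Qed.

Lemma CR3_bound : 9/4*(EJ2 CR3 + EJ3 CR3) <= 45/139968.
Proof.
  unfold EJ2, EJ3. rewrite <- (chas CR3 (2/3) (13/18) (7/9)).
  assert (H1 : RInt (mind CR3) (2/3) (13/18) <= ((13/18 - 25/36)^3 - (2/3-25/36)^3)/3).
  { apply ub_piece; [lra|]. intros; apply mind_le; simpl; auto. }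
  assert (H2 : RInt (mind CR3) (13/18) (7/9) <= ((7/9 - 3/4)^3 - (13/18-3/4)^3)/3).
  { apply ub_piece; [lra|]. intros; apply mind_le; simpl; auto. }
  assert (H3 : RInt (mind CR3) (8/9) 1 <= ((1 - 17/18)^3 - (8/9-17/18)^3)/3).
  { apply ub_piece; [lra|]. intros; apply mind_le; simpl; auto. }
  lra.
Qed.

Lemma CR4_bound : 9/4*(EJ2 CR4 + EJ3 CR4) <= 1/7776.
Proof.
  unfold EJ2, EJ3. rewrite <- (chas CR4 (2/3) (13/18) (7/9)), <- (chas CR4 (8/9) (17/18) 1).
  assert (H1 : RInt (mind CR4) (2/3) (13/18) <= ((13/18 - 25/36)^3 - (2/3-25/36)^3)/3).
  { apply ub_piece; [lra|]. intros; apply mind_le; simpl; auto. }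
  assert (H2 : RInt (mind CR4) (13/18) (7/9) <= ((7/9 - 3/4)^3 - (13/18-3/4)^3)/3).
  { apply ub_piece; [lra|]. intros; apply mind_le; simpl; auto. }
  assert (H3 : RInt (mind CR4) (8/9) (17/18) <= ((17/18 - 33/36)^3 - (8/9-33/36)^3)/3).
  { apply ub_piece; [lra|]. intros; apply mind_le; simpl; auto. }
  assert (H4 : RInt (mind CR4) (17/18) 1 <= ((1 - 35/36)^3 - (17/18-35/36)^3)/3).
  { apply ub_piece; [lra|]. intros; apply mind_le; simpl; auto. }
  lra.
Qed.

Lemma fin1 : forall s S1 S2, 0 <= s <= 1/18 -> S1 >= (s+1/9)^3/9 - s^3 -> S2 >= (1/9-s)^3 ->
  S1 + S2 > 5/11664.
Proof. intros s S1 S2 H H1 H2. nra. Qed.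

Lemma pmean u h : 0 <= u -> 0 <= h -> (u+2*h)^3/9 <= u^3 + 2*h^3.
Proof.
  intros Hu Hh. assert (0 <= (u-h)^2*(4*u+5*h)) by (apply Rmult_le_pos; [apply pow2_ge_0|lra]). nra.
Qed.

Lemma cube_mono x y : 0 <= x <= y -> x^3 <= y^3.
Proof. intros H. apply pow_incr; auto. Qed.

Lemma side_gen u h s : 0 <= u -> 0 <= s -> s <= h -> u + 2*h = s + 1/9 ->
  u^3 + 2*h^3 - s^3 >= s^3 /\ u^3 + 2*h^3 - s^3 >= (s+1/9)^3/9 - s^3.
Proof.
  intros Hu Hs Hh E. split.
  - pose proof (cube_mono s h ltac:(lra)). assert (0 <= u^3) by (apply pow_le; auto). lra.
  - pose proof (pmean u h Hu ltac:(lra)). rewrite E in H. lra.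
Qed.

Lemma G2 n al : (3<=n)%nat -> optimal_n_means n al -> forall a, In a al -> ~ (7/9 < a < 8/9).
Proof.
  intros Hn Ho a Ha Hgap.
  pose proof (F1a n al Ho) as P0'. pose proof (F1b n al Ho) as P1'. pose proof (G1 n al Hn Ho) as HG.
  destruct (S4 n al Hn Ho) as [w [Hw Hw']].
  destruct (classic (needed al a (fun x => 8/9<=x<=1))) as [N2|N2].
  2:{ apply (MOVE2 n al a (7/9) Ho Ha); [lra|unfold inJall; lra|].
      intros x Hx. destruct Hx as [Hx|[Hx|Hx]].
      - left. apply sqle2. right. lra.
      - left. apply sqle2. right. lra.
      - right. apply (not_needed _ _ _ N2). exact Hx. }
  destruct (classic (needed al a (fun x => 0<=x<=1/3 \/ 2/3<=x<=7/9))) as [N1|N1].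
  2:{ apply (MOVE2 n al a (8/9) Ho Ha); [lra|unfold inJall; lra|].
      intros x Hx. destruct Hx as [Hx|[Hx|Hx]].
      - right. apply (not_needed _ _ _ N1). left; exact Hx.
      - right. apply (not_needed _ _ _ N1). right; exact Hx.
      - left. apply sqle2. left. lra. }
  destruct N1 as [x1 [Hx1 N1]]. destruct N2 as [x2 [Hx2 N2]].
  assert (Hs := both_side al a x1 x2 ltac:(lra) N1 N2).
  assert (Hs' : forall y, In y al -> y <> a -> y < 14/9 - a \/ y > 16/9 - a).
  { intros y Hy Hne. destruct (Hs y Hy Hne); [left|right]; lra. }
  assert (Hnn : al <> []) by (eapply nonnil_of_in; eauto).
  assert (Hcl : forall y, In y al -> y <> a -> y <= 1/3 \/ (2/3 <= y < 14/9 - a) \/ (16/9 - a < y <= 1)).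
  { intros y Hy Hne. pose proof (P0' y Hy). pose proof (P1' y Hy). pose proof (HG y Hy).
    destruct (Hs' y Hy Hne); lra. }
  assert (L1 : 0 <= EJ1 al) by (apply rint_ge0; lra).
  destruct (classic (exists y, In y al /\ y <> a /\ 1/2 < y /\ y < a)) as [Ly|Ly];
  destruct (classic (exists z, In z al /\ z <> a /\ z > a)) as [Rz|Rz].
  4:{
    assert (Hy : forall y, In y al -> y <> a -> y <= 1/3).
    { intros y Hy Hne. destruct (Hcl y Hy Hne) as [?|[?|?]]; auto.
      - exfalso; apply Ly; exists y; repeat split; auto; lra.
      - exfalso; apply Rz; exists y; repeat split; auto; lra. }
    pose proof (Vbound n al Hn Ho) as V. rewrite dist_dec in V.
    assert (L2 : ((7/9 - a)^3 - (2/3 - a)^3)/3 <= EJ2 al).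
    { apply lb_piece; try lra. intros x Hx. apply mind_ge; auto. intros y Hy'.
      destruct (Req_dec y a) as [->|Hne]; [apply Rle_refl|].
      pose proof (Hy y Hy' Hne). apply sqle2. right. lra. }
    assert (L3 : ((1 - a)^3 - (8/9 - a)^3)/3 <= EJ3 al).
    { apply lb_piece; try lra. intros x Hx. apply mind_ge; auto. intros y Hy'.
      destruct (Req_dec y a) as [->|Hne]; [apply Rle_refl|].
      pose proof (Hy y Hy' Hne). apply sqle2. left. lra. }
    nra. }
  3:{
    destruct Rz as [z [Hz [Hza Hz']]].
    assert (L2 : ((7/9 - 7/9)^3 - (2/3 - 7/9)^3)/3 <= EJ2 al).
    { apply lb_piece; try lra. intros x Hx. apply mind_ge; auto. intros y Hy'.
      apply sqle2. right. destruct (Req_dec y a) as [->|Hne]; [lra|].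
      destruct (Hcl y Hy' Hne) as [?|[?|?]]; try lra.
      exfalso; apply Ly; exists y; repeat split; auto; lra. }
    assert (L3 : 0 <= EJ3 al) by (apply rint_ge0; lra).
    apply (SPLIT n al CR2 w Ho Hw ltac:(lra) HG ltac:(discriminate)).
    + apply (NoDup_incl_length (l:=[a;z])).
      * constructor. intros [H|[]]; lra. constructor. intros []. constructor.
      * intros c [<-|[<-|[]]]; apply in_pR; auto; lra.
    + pose proof CR2_bound. lra. }
  2:{
    destruct Ly as [y [Hy [Hya [Hy1 Hy2]]]].
    assert (L3 : ((1 - 8/9)^3 - (8/9 - 8/9)^3)/3 <= EJ3 al).
    { apply lb_piece; try lra. intros x Hx. apply mind_ge; auto. intros v Hv.
      apply sqle2. left. destruct (Req_dec v a) as [->|Hne]; [lra|].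
      split; [lra|]. left. destruct (Rle_dec v a); [lra|].
      exfalso; apply Rz; exists v; repeat split; auto; lra. }
    assert (L2 : 0 <= EJ2 al) by (apply rint_ge0; lra).
    apply (SPLIT n al CR2 w Ho Hw ltac:(lra) HG ltac:(discriminate)).
    + apply (NoDup_incl_length (l:=[y;a])).
      * constructor. intros [H|[]]; lra. constructor. intros []. constructor.
      * intros c [<-|[<-|[]]]; apply in_pR; auto; lra.
    + pose proof CR2_bound. lra. }
  destruct Ly as [y [Hy [Hya [Hy1 Hy2]]]]. destruct Rz as [z [Hz [Hza Hz']]].
  assert (Hyb : 2/3 <= y < 14/9 - a).
  { destruct (Hcl y Hy Hya) as [?|[?|?]]; lra. }
  assert (Hzb : 16/9 - a < z <= 1).
  { destruct (Hcl z Hz Hza) as [?|[?|?]]; lra. }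
  destruct (le_lt_dec 4 (length (filter pR al))) as [H4|H4].
  -
    assert (L2 : ((7/9 - (14/9-a))^3 - ((14/9-a) - (14/9-a))^3)/3 <= EJ2 al).
    { apply lb_piece; try lra. intros x Hx. apply mind_ge; auto. intros v Hv.
      apply sqle2. left. split; [lra|].
      destruct (Req_dec v a) as [->|Hne]; [right; lra|].
      destruct (Hs' v Hv Hne); [left|right]; lra. }
    assert (L3 : (((16/9-a) - (16/9-a))^3 - (8/9 - (16/9-a))^3)/3 <= EJ3 al).
    { apply lb_piece; try lra. intros x Hx. apply mind_ge; auto. intros v Hv.
      apply sqle2. right. split; [lra|].
      destruct (Req_dec v a) as [->|Hne]; [right; lra|].
      destruct (Hs' v Hv Hne); [right|left]; lra. }
    apply (SPLIT n al CR4 w Ho Hw ltac:(lra) HG ltac:(discriminate)); [simpl; lia|].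
    pose proof CR4_bound.
    assert (0 <= ((a-7/9) - (8/9-a))^2 * ((a-7/9)+(8/9-a))) by (apply Rmult_le_pos; [apply pow2_ge_0|lra]).
    nra.
  -
    assert (Hu : forall v, In v al -> v > 1/2 -> v = y \/ v = a \/ v = z).
    { intros v Hv Hv'. apply NNPP. intro Hn'.
      assert (4 <= length (filter pR al))%nat; [|lia].
      apply (NoDup_incl_length (l:=[y;a;z;v])).
      - repeat constructor; simpl; intros; repeat match goal with H : _ \/ _ |- _ => destruct H end;
          try contradiction; subst; try lra; apply Hn'; tauto.
      - intros c Hc. simpl in Hc. apply in_pR; [|].
        + destruct Hc as [<-|[<-|[<-|[<-|[]]]]]; auto.
        + destruct Hc as [<-|[<-|[<-|[<-|[]]]]]; lra. }
    assert (Hcl2 : forall v, In v al -> v <= 1/3 \/ v = y \/ v = a \/ v = z).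
    { intros v Hv. destruct (Rle_dec v (1/2)).
      - left. pose proof (HG v Hv). pose proof (P0' v Hv). lra.
      - right. apply Hu; auto; lra. }
    set (m := (y+a)/2). set (m' := (a+z)/2).
    assert (B1 : ((m-y)^3 - (2/3-y)^3)/3 <= RInt (mind al) (2/3) m).
    { apply lb_piece; unfold m; try lra. intros x Hx. apply mind_ge; auto. intros v Hv.
      destruct (Hcl2 v Hv) as [? | [ -> | [ -> | -> ]]]; try apply Rle_refl; apply sqle3, prodnn;
      [left; split; lra|right; split; lra|right; split; lra]. }
    assert (B2 : ((7/9-a)^3 - (m-a)^3)/3 <= RInt (mind al) m (7/9)).
    { apply lb_piece; unfold m; try lra. intros x Hx. apply mind_ge; auto. intros v Hv.
      destruct (Hcl2 v Hv) as [? | [ -> | [ -> | -> ]]]; try apply Rle_refl; apply sqle3, prodnn;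
      [left; split; lra|left; split; lra|right; split; lra]. }
    assert (B3 : ((m'-a)^3 - (8/9-a)^3)/3 <= RInt (mind al) (8/9) m').
    { apply lb_piece; unfold m'; try lra. intros x Hx. apply mind_ge; auto. intros v Hv.
      destruct (Hcl2 v Hv) as [? | [ -> | [ -> | -> ]]]; try apply Rle_refl; apply sqle3, prodnn;
      [left; split; lra|left; split; lra|right; split; lra]. }
    assert (B4 : ((1-z)^3 - (m'-z)^3)/3 <= RInt (mind al) m' 1).
    { apply lb_piece; unfold m'; try lra. intros x Hx. apply mind_ge; auto. intros v Hv.
      destruct (Hcl2 v Hv) as [? | [ -> | [ -> | -> ]]]; try apply Rle_refl; apply sqle3, prodnn;
      [left; split; lra|left; split; lra|left; split; lra]. }
    assert (E2 : EJ2 al = RInt (mind al) (2/3) m + RInt (mind al) m (7/9)) by (unfold EJ2; rewrite chas; auto).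
    assert (E3 : EJ3 al = RInt (mind al) (8/9) m' + RInt (mind al) m' 1) by (unfold EJ3; rewrite chas; auto).
    destruct (side_gen (y-2/3) ((a-y)/2) (a-7/9)) as [S1a S1b]; try lra.
    destruct (side_gen (1-z) ((z-a)/2) (8/9-a)) as [S2a S2b]; try lra.
    assert (Q1 : (y - 2/3)^3 + 2*((a-y)/2)^3 - (a-7/9)^3 =
                 3*(((m-y)^3 - (2/3-y)^3)/3 + ((7/9-a)^3 - (m-a)^3)/3)) by (unfold m; field).
    assert (Q2 : (1-z)^3 + 2*((z-a)/2)^3 - (8/9-a)^3 =
                 3*(((m'-a)^3 - (8/9-a)^3)/3 + ((1-z)^3 - (m'-z)^3)/3)) by (unfold m'; field).
    assert (Fin : 3*(((m-y)^3 - (2/3-y)^3)/3 + ((7/9-a)^3 - (m-a)^3)/3) +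
                  3*(((m'-a)^3 - (8/9-a)^3)/3 + ((1-z)^3 - (m'-z)^3)/3) > 5/11664).
    { rewrite <- Q1, <- Q2. destruct (Rle_dec (a - 7/9) (1/18)).
      - apply (fin1 (a-7/9)); try lra.
      - rewrite Rplus_comm. apply (fin1 (8/9-a)); try lra. }
    apply (SPLIT n al CR3 w Ho Hw ltac:(lra) HG ltac:(discriminate)).
    + simpl. assert (3 <= length (filter pR al))%nat; [|lia].
      apply (NoDup_incl_length (l:=[y;a;z])).
      * repeat constructor; simpl; intros; repeat match goal with H : _ \/ _ |- _ => destruct H end;
          try contradiction; lra.
      * intros c Hc. simpl in Hc. apply in_pR.
        { destruct Hc as [<-|[<-|[<-|[]]]]; auto. }
        { destruct Hc as [<-|[<-|[<-|[]]]]; lra. }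
    + pose proof CR3_bound. lra.
Qed.

Lemma S6 n al : (3<=n)%nat -> optimal_n_means n al -> exists b, In b al /\ 8/9 <= b < 1.
Proof.
  intros Hn Ho. apply NNPP; intro Hno.
  pose proof (F1a n al Ho) as P0'. pose proof (F1b n al Ho) as P1'.
  pose proof (G1 n al Hn Ho) as HG. pose proof (G2 n al Hn Ho) as HG2.
  assert (Hnn : al <> []) by (apply nonnil_len; apply (opt_len _ _ Ho)).
  assert (Hcl : forall y, In y al -> y <= 1/3 \/ (2/3 <= y <= 7/9) \/ y = 1).
  { intros y Hy. pose proof (P0' y Hy). pose proof (P1' y Hy). pose proof (HG y Hy). pose proof (HG2 y Hy).
    destruct (Rle_dec (8/9) y). { right; right. destruct (Req_dec y 1); auto. exfalso; apply Hno. exists y; split; auto; lra. }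
    lra. }
  pose proof (Vbound n al Hn Ho) as V. rewrite dist_dec in V.
  assert (L1 : 0 <= EJ1 al) by (apply rint_ge0; lra).
  assert (L2 : 0 <= EJ2 al) by (apply rint_ge0; lra).
  destruct (classic (In 1 al)) as [H1|H1].
  - set (be := repl 1 (17/18) al).
    assert (Hl : (1 <= length be <= n)%nat) by (unfold be; rewrite repl_len; apply (opt_len _ _ Ho)).
    pose proof (opt_le _ _ _ Ho Hl) as D. rewrite !dist_dec in D.
    assert (A1 : EJ1 be <= EJ1 al).
    { unfold EJ1; apply rint_le; [lra|]. intros x Hx. apply repl_mono; auto. left. apply sqle2. right. lra. }
    assert (A2 : EJ2 be <= EJ2 al).
    { unfold EJ2; apply rint_le; [lra|]. intros x Hx. apply repl_mono; auto. left. apply sqle2. right. lra. }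
    assert (A3 : EJ3 be <= ((1 - 17/18)^3 - (8/9-17/18)^3)/3).
    { apply ub_piece; [lra|]. intros; apply mind_le. apply repl_in_c; auto. }
    assert (A4 : ((1 - 1)^3 - (8/9-1)^3)/3 <= EJ3 al).
    { apply lb_piece; try lra. intros x Hx. apply mind_ge; auto. intros y Hy.
      apply sqle2. right. split; [lra|]. destruct (Hcl y Hy) as [?|[?|?]]; [right|right|left]; lra. }
    lra.
  - assert (A4 : ((1 - 7/9)^3 - (8/9-7/9)^3)/3 <= EJ3 al).
    { apply lb_piece; try lra. intros x Hx. apply mind_ge; auto. intros y Hy.
      apply sqle2. left. split; [lra|]. left.
      destruct (Hcl y Hy) as [?|[?|?]]; try lra. subst; contradiction. }
    lra.
Qed.

Lemma S5 n al : (3<=n)%nat -> optimal_n_means n al -> exists b, In b al /\ 2/3 < b <= 7/9.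
Proof.
  intros Hn Ho. apply NNPP; intro Hno.
  pose proof (F1a n al Ho) as P0'. pose proof (F1b n al Ho) as P1'.
  pose proof (G1 n al Hn Ho) as HG. pose proof (G2 n al Hn Ho) as HG2.
  destruct (S4 n al Hn Ho) as [w [Hw Hw']].
  assert (Hnn : al <> []) by (apply nonnil_len; apply (opt_len _ _ Ho)).
  assert (Hcl : forall y, In y al -> y <= 1/3 \/ y = 2/3 \/ 8/9 <= y <= 1).
  { intros y Hy. pose proof (P0' y Hy). pose proof (P1' y Hy). pose proof (HG y Hy). pose proof (HG2 y Hy).
    destruct (Rle_dec y (7/9)). 2:{ lra. }
    destruct (Rle_dec y (2/3)). { destruct (Req_dec y (2/3)); [auto|left; lra]. }
    exfalso; apply Hno. exists y; split; auto; lra. }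
  pose proof (Vbound n al Hn Ho) as V. rewrite dist_dec in V.
  assert (L1 : 0 <= EJ1 al) by (apply rint_ge0; lra).
  assert (L3 : 0 <= EJ3 al) by (apply rint_ge0; lra).
  destruct (classic (In (2/3) al)) as [H1|H1].
  - set (be := repl (2/3) (13/18) al).
    assert (Hl : (1 <= length be <= n)%nat) by (unfold be; rewrite repl_len; apply (opt_len _ _ Ho)).
    pose proof (opt_le _ _ _ Ho Hl) as D. rewrite !dist_dec in D.
    assert (A1 : EJ1 be <= EJ1 al).
    { unfold EJ1; apply rint_le; [lra|]. intros x Hx. apply repl_mono; auto. right.
      exists w. split; auto. split; [lra|]. apply sqle3. apply prodnn. right; split; lra. }
    assert (A3 : EJ3 be <= EJ3 al).
    { unfold EJ3; apply rint_le; [lra|]. intros x Hx. apply repl_mono; auto. left. apply sqle2. left. lra. }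
    assert (A2 : EJ2 be <= ((7/9 - 13/18)^3 - (2/3-13/18)^3)/3).
    { apply ub_piece; [lra|]. intros; apply mind_le. apply repl_in_c; auto. }
    assert (A4 : ((7/9 - 2/3)^3 - (2/3-2/3)^3)/3 <= EJ2 al).
    { apply lb_piece; try lra. intros x Hx. apply mind_ge; auto. intros y Hy.
      apply sqle2. left. split; [lra|]. destruct (Hcl y Hy) as [?|[?|?]]; [left|left|right]; lra. }
    lra.
  - assert (A4 : ((7/9 - 8/9)^3 - (2/3-8/9)^3)/3 <= EJ2 al).
    { apply lb_piece; try lra. intros x Hx. apply mind_ge; auto. intros y Hy.
      apply sqle2. right. split; [lra|].
      destruct (Hcl y Hy) as [?|[?|?]]; [right; lra| subst; contradiction|left; lra]. }
    lra.
Qed.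

Lemma abs_lt x a b : Rabs (x - b) < Rabs (x - a) -> ~ (Rabs (x-a) <= Rabs (x-b)).
Proof. lra. Qed.

Theorem proposition5p7 (n : nat) (alpha : list R) :
  (3 <= n)%nat -> optimal_n_means n alpha ->
  (forall i : nat, (1 <= i <= 3)%nat -> exists a, In a alpha /\ inJ i a) /\
  (forall a, In a alpha -> ~ (1/3 < a < 2/3) /\ ~ (7/9 < a < 8/9)) /\
  (forall i j : nat, (1 <= i <= 3)%nat -> (1 <= j <= 3)%nat -> i <> j ->
     forall a, In a alpha -> inJ i a ->
     forall x, inJ j x -> ~ voronoi a alpha x).
Proof.
  intros Hn Ho.
  destruct (S4 n alpha Hn Ho) as [w1 [Hw1 Hw1']].
  destruct (S5 n alpha Hn Ho) as [w2 [Hw2 Hw2']].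
  destruct (S6 n alpha Hn Ho) as [w3 [Hw3 Hw3']].
  split; [|split].
  - intros i Hi. destruct i as [|[|[|[|i]]]]; try lia.
    + exists w1; simpl; split; auto; lra.
    + exists w2; simpl; split; auto; lra.
    + exists w3; simpl; split; auto; lra.
  - intros a Ha. split; [apply (G1 n alpha Hn Ho a Ha)|apply (G2 n alpha Hn Ho a Ha)].
  - intros i j Hi Hj Hij a Ha Hia x Hjx Hv.
    assert (K : forall b, In b alpha -> Rabs (x - b) < Rabs (x - a) -> False).
    { intros b Hb Hlt. specialize (Hv b Hb). lra. }
    destruct i as [|[|[|[|i]]]]; try lia; destruct j as [|[|[|[|j]]]]; try lia;
      simpl in Hia, Hjx.
    + apply (K w2 Hw2). unfold Rabs; repeat destruct Rcase_abs; lra.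
    + apply (K w3 Hw3). unfold Rabs; repeat destruct Rcase_abs; lra.
    + apply (K w1 Hw1). unfold Rabs; repeat destruct Rcase_abs; lra.
    + apply (K w3 Hw3). unfold Rabs; repeat destruct Rcase_abs; lra.
    + apply (K w1 Hw1). unfold Rabs; repeat destruct Rcase_abs; lra.
    + apply (K w2 Hw2). unfold Rabs; repeat destruct Rcase_abs; lra.
Qed.
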